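(* Let $\Gamma<\mathrm{PSL}_2(\mathbb{C})$ be discrete, co-compact and torsion-free, $f:\mathbb{R}/2\pi\mathbb{Z}\to\mathbb{R}$ smooth with $\hat f(0)=0$, $T>0$ and $0<\eta\le\eta_0$. Then (1) the distribution $\mu_{T,f,\eta}$ has mean $b_{f,\eta}$; (2) $\mu_{T,f,\eta}$ is compactly supported on the interval \[\Big[b_{f,\eta}-2\sum_{|s|,|p|<T}m_\Gamma(\pi_{is,p})|\hat f(-p)||c_{s,\eta}|,\ b_{f,\eta}+2\sum_{|s|,|p|<T}m_\Gamma(\pi_{is,p})|\hat f(-p)||c_{s,\eta}|\Big]\] \[\subset\Big[b_{f,\eta}-2\sum_{s,p}m_\Gamma(\pi_{is,p})|\hat f(-p)||c_{s,\eta}|,\ b_{f,\eta}+2\sum_{s,p}m_\Gamma(\pi_{is,p})|\hat f(-p)||c_{s,\eta}|\Big],\] the sums running over principal series representations $\pi_{is,p}$ occurring in $L^2(\Gamma\backslash G)$.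
   Context: $G=\mathrm{PSL}_2(\mathbb{C})$. $\pi_{is,p}$ ($s\in\mathbb{R},p\in\mathbb{Z}$) is the unitary principal series representation induced from $\begin{pmatrix}e^{(u+i\theta)/2}&*\\0&e^{-(u+i\theta)/2}\end{pmatrix}\mapsto e^{ius+ip\theta}$; $m_\Gamma(\pi)$ is the multiplicity in $L^2(\Gamma\backslash G)$. $\hat f(p)=\frac1{2\pi}\int_0^{2\pi}f(\theta)e^{-ip\theta}d\theta$. Fix smooth even nonnegative $\psi$ supported in $[-1,1]$, $\int\psi=1$; $\psi_\eta(t)=\eta^{-1}\psi(t/\eta)$; $c_{s,\eta}=\int\psi_\eta(t)\frac{e^{t(1+is)}}{1+is}dt$; $b_{f,\eta}=\big(\sum_{p\ne0}m_\Gamma(\pi_{0,p})\mathrm{Re}\,\hat f(p)-2\mathrm{Re}\,\hat f(1)\big)2c_{0,\eta}$. Let $(s_1,p_1),\dots,(s_n,p_n)$ be the distinct pairs with $s_j\ne0$, $|s_j|,|p_j|<T$, $m_\Gamma(\pi_{is_j,p_j})\neq0$; $w_T(x)=2\sum_{j=1}^nm_\Gamma(\pi_{is_j,p_j})\mathrm{Re}\big(\hat f(-p_j)e^{2\pi ix_j}c_{s_j,\eta}\big)+b_{f,\eta}$ on $\mathbb{T}^n=\mathbb{R}^n/\mathbb{Z}^n$; $A$ is the closure of $\{(s_jy/2\pi)_j:y\in\mathbb{R}\}$ in $\mathbb{T}^n$ with Haar probability measure; $\mu_{T,f,\eta}$ is the pushforward of this Haar measure under $w_T|_A$. Equivalently,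 $\int h\,d\mu_{T,f,\eta}=\lim_{Y\to\infty}\frac1Y\int_{\eta_0}^Yh(E^{(T)}[f,g_{y,\eta}])dy$ for continuous $h$, where $E^{(T)}[f,g_{y,\eta}]=2\sum_{j}m_\Gamma(\pi_{is_j,p_j})\mathrm{Re}(\hat f(-p_j)e^{is_jy}c_{s_j,\eta})+b_{f,\eta}$. *)

(* Defs.v *)
From Stdlib Require Import Reals Lra ZArith List.
From Coquelicot Require Export Coquelicot.
Open Scope R_scope.

Definition lsum {A : Type} (F : A -> R) (L : list A) : R :=
  fold_right (fun a acc => F a + acc) 0 L.

(* Abstract spectral data: multiplicity m s p = m_Gamma(pi_{is,p}). *)
Definition mult_data := R -> Z -> nat.

Definition smooth (f : R -> R) : Prop := forall (n : nat) (x : R), ex_derive_n f n x.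
Definition periodic_2pi (f : R -> R) : Prop := forall x, f (x + 2 * PI) = f x.

(* Fourier coefficient  fhat(p) = 1/(2pi) int_0^{2pi} f(t) e^{-ipt} dt, split into
   real and imaginary parts. *)
Definition fhat (f : R -> R) (p : Z) : C :=
  (/ (2 * PI) * RInt (fun t => f t * cos (IZR p * t)) 0 (2 * PI),
   - (/ (2 * PI) * RInt (fun t => f t * sin (IZR p * t)) 0 (2 * PI))).

Definition psi_eta (psi : R -> R) (eta : R) (t : R) : R := / eta * psi (t / eta).

(* c_{s,eta} = int psi_eta(t) e^{t(1+is)} / (1+is) dt ; psi_eta vanishes outside
   [-eta, eta], so the integral over R is the integral over [-eta, eta]. *)
Definition c_coef (psi : R -> R) (s eta : R) : C :=
  Cdiv (RInt (fun t => psi_eta psi eta t * exp t * cos (t * s)) (- eta) eta,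
        RInt (fun t => psi_eta psi eta t * exp t * sin (t * s)) (- eta) eta)
       (1, s).

(* sum_{p <> 0} m(0,p) Re fhat(p), summed symmetrically over p = +-(k+1) *)
Definition b_series (m : mult_data) (f : R -> R) : R :=
  Series (fun k : nat =>
    INR (m 0 (Z.of_nat (S k))) * Re (fhat f (Z.of_nat (S k)))
    + INR (m 0 (- Z.of_nat (S k))%Z) * Re (fhat f (- Z.of_nat (S k))%Z)).

(* b_{f,eta} ; c_{0,eta} = int psi_eta(t) e^t dt is real *)
Definition b_coef (m : mult_data) (f psi : R -> R) (eta : R) : R :=
  (b_series m f - 2 * Re (fhat f 1)) * 2 * Re (c_coef psi 0 eta).

Definition bound_term (m : mult_data) (f psi : R -> R) (eta : R) (q : R * Z) : R :=
  INR (m (fst q) (snd q)) * Cmod (fhat f (- snd q)%Z) * Cmod (c_coef psi (fst q) eta).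

(* E^{(T)}[f, g_{y,eta}], where L enumerates the distinct pairs (s,p) with
   |s|,|p| < T and m(s,p) <> 0; only those with s <> 0 enter. *)
Definition E_T (m : mult_data) (f psi : R -> R) (eta : R) (L : list (R * Z)) (y : R) : R :=
  2 * lsum (fun q => if Req_EM_T (fst q) 0 then 0 else
              INR (m (fst q) (snd q)) *
              Re (Cmult (Cmult (fhat f (- snd q)%Z) (cos (fst q * y), sin (fst q * y)))
                        (c_coef psi (fst q) eta))) L
  + b_coef m f psi eta.

(* integral of h against mu_{T,f,eta}, via the time-average description:
   lim_{Y -> oo} (1/Y) int_{eta0}^{Y} h(E(y)) dy = l *)
Definition mu_integral_is (m : mult_data) (f psi : R -> R) (eta eta0 : R)
  (L : list (R * Z)) (h : R -> R) (l : R) : Prop :=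
  is_lim (fun Y => / Y * RInt (fun y => h (E_T m f psi eta L y)) eta0 Y) p_infty l.

(* sum over all pairs (s,p) with m(s,p) <> 0 of the nonnegative terms, as the
   supremum of finite partial sums (value in Rbar, possibly +oo) *)
Definition full_bound (m : mult_data) (f psi : R -> R) (eta : R) : Rbar :=
  Lub_Rbar (fun x => exists L : list (R * Z), NoDup L /\
      (forall q, In q L -> m (fst q) (snd q) <> 0%nat) /\
      x = lsum (bound_term m f psi eta) L).

(* Main.v *)
Require Import Defs.
From Stdlib Require Import Reals ZArith List Lra.
From Coquelicot Require Import Coquelicot.
Open Scope R_scope.

Definition Good (g : R -> R) : Prop :=
  (exists P M, forall y, is_derive P y (g y) /\ Rabs (P y) <= M) /\
  (forall y, continuous g y).

Lemma Good_trig a c s : s <> 0 -> Good (fun y => a * cos (s * y) + c * sin (s * y)).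
Proof.
  intros Hs. split.
  - exists (fun y => (a * sin (s * y) - c * cos (s * y)) / s),
      ((Rabs a + Rabs c) / Rabs s).
    intros y; split.
    + auto_derive; auto. field; auto.
    + unfold Rdiv. rewrite Rabs_mult, Rabs_inv.
      apply Rmult_le_compat_r. left; apply Rinv_0_lt_compat, Rabs_pos_lt; auto.
      eapply Rle_trans. apply Rabs_triang. rewrite Rabs_Ropp, !Rabs_mult.
      pose proof (Rabs_pos a); pose proof (Rabs_pos c).
      assert (Rabs (sin (s*y)) <= 1) by apply Rabs_le, SIN_bound.
      assert (Rabs (cos (s*y)) <= 1) by apply Rabs_le, COS_bound.
      pose proof (Rabs_pos (sin (s*y))); pose proof (Rabs_pos (cos (s*y))).
      nra.
  - intros y. apply (ex_derive_continuous (K:=R_AbsRing) (V:=R_NormedModule) (fun y => a * cos (s * y) + c * sin (s * y))). auto_derive; auto.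
Qed.

Lemma Good_0 : Good (fun _ => 0).
Proof.
  split.
  - exists (fun _ => 0), 0. intros y; split. auto_derive; auto.
    rewrite Rabs_R0; lra.
  - intros y. apply continuous_const.
Qed.

Lemma Good_plus g1 g2 : Good g1 -> Good g2 -> Good (fun y => g1 y + g2 y).
Proof.
  intros [[P1 [M1 H1]] C1] [[P2 [M2 H2]] C2]. split.
  - exists (fun y => P1 y + P2 y), (M1 + M2). intros y.
    destruct (H1 y), (H2 y). split.
    + apply (is_derive_plus P1 P2); auto.
    + eapply Rle_trans. apply Rabs_triang. lra.
  - intros y. apply (continuous_plus g1 g2); auto.
Qed.

Lemma Good_scal k g : Good g -> Good (fun y => k * g y).
Proof.
  intros [[P [M H]] Cg]. split.
  - exists (fun y => k * P y), (Rabs k * M). intros y. destruct (H y). split.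
    + apply (is_derive_scal P y k); auto.
    + rewrite Rabs_mult. apply Rmult_le_compat_l; auto. apply Rabs_pos.
  - intros y. apply (continuous_mult (fun _ => k) g). apply continuous_const. auto.
Qed.

Lemma Good_ext g1 g2 : (forall y, g1 y = g2 y) -> Good g1 -> Good g2.
Proof.
  intros E [[P [M H]] Cg]. split.
  - exists P, M. intros y. destruct (H y). split; auto.
    rewrite <- E; auto.
  - intros y. apply (continuous_ext g1); auto.
Qed.

Lemma Good_lsum {A} (F : A -> R -> R) (L : list A) :
  (forall q, Good (F q)) -> Good (fun y => lsum (fun q => F q y) L).
Proof.
  intros HF. induction L as [|a L IH]; simpl.
  - apply Good_0.
  - apply Good_plus; auto.
Qed.

Lemma Good_mean g b eta0 : 0 < eta0 -> Good g ->
  is_lim (fun Y => / Y * RInt (fun y => g y + b) eta0 Y) p_infty b.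
Proof.
  intros He [[P [M H]] Cg].
  assert (HI : forall Y, RInt (fun y => g y + b) eta0 Y = (P Y + b * Y) - (P eta0 + b * eta0)).
  { intros Y. apply is_RInt_unique.
    apply (is_RInt_derive (fun y => P y + b * y)).
    - intros x _. destruct (H x).
      apply (is_derive_plus P (fun y => b * y)); auto.
      auto_derive; auto; ring.
    - intros x _. apply (continuous_plus g (fun _ => b)); auto. apply continuous_const. }
  apply is_lim_spec. intros eps. simpl.
  assert (HM : 0 <= M) by (destruct (H 0); pose proof (Rabs_pos (P 0)); lra).
  set (K := 2 * M + Rabs b * eta0).
  assert (HK : 0 <= K) by (unfold K; pose proof (Rabs_pos b); nra).
  exists (Rmax 1 (K / eps)). intros Y HY.
  assert (HY1 : 1 < Y) by (eapply Rle_lt_trans; [apply Rmax_l|exact HY]).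
  assert (HY2 : K / eps < Y) by (eapply Rle_lt_trans; [apply Rmax_r|exact HY]).
  rewrite HI.
  replace (/ Y * (P Y + b * Y - (P eta0 + b * eta0)) - b) with
     (/ Y * (P Y - P eta0 - b * eta0)) by (field; lra).
  rewrite Rabs_mult, Rabs_inv, (Rabs_pos_eq Y) by lra.
  assert (Rabs (P Y - P eta0 - b * eta0) <= K).
  { destruct (H Y) as [_ h1], (H eta0) as [_ h2]. unfold K.
    unfold Rminus. eapply Rle_trans. apply Rabs_triang.
    rewrite Rabs_Ropp, Rabs_mult, (Rabs_pos_eq eta0) by lra.
    eapply Rle_trans. apply Rplus_le_compat_r. apply Rabs_triang. rewrite Rabs_Ropp. lra. }
  pose proof (cond_pos eps).
  apply Rmult_lt_reg_l with Y; [lra|].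
  rewrite <- Rmult_assoc, Rinv_r, Rmult_1_l by lra.
  apply Rle_lt_trans with K; auto.
  apply Rmult_lt_reg_r with (/ eps). apply Rinv_0_lt_compat; lra.
  rewrite Rmult_assoc, Rinv_r, Rmult_1_r by lra. exact HY2.
Qed.

Lemma term_good (m : mult_data) f psi eta (q : R * Z) :
  Good (fun y => if Req_EM_T (fst q) 0 then 0 else
              INR (m (fst q) (snd q)) *
              Re (Cmult (Cmult (fhat f (- snd q)%Z) (cos (fst q * y), sin (fst q * y)))
                        (c_coef psi (fst q) eta))).
Proof.
  destruct (Req_EM_T (fst q) 0) as [E|E].
  - apply Good_0.
  - destruct (fhat f (- snd q)%Z) as [a1 a2].
    destruct (c_coef psi (fst q) eta) as [c1 c2].
    set (k := INR (m (fst q) (snd q))).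
    apply Good_ext with (fun y => (k * (a1 * c1 - a2 * c2)) * cos (fst q * y)
                              + (- k * (a2 * c1 + a1 * c2)) * sin (fst q * y)).
    + intros y. unfold Cmult, Re; simpl. ring.
    + apply Good_trig; auto.
Qed.

Lemma term_bound (m : mult_data) f psi eta (q : R * Z) y :
  Rabs (if Req_EM_T (fst q) 0 then 0 else
              INR (m (fst q) (snd q)) *
              Re (Cmult (Cmult (fhat f (- snd q)%Z) (cos (fst q * y), sin (fst q * y)))
                        (c_coef psi (fst q) eta))) <= bound_term m f psi eta q.
Proof.
  unfold bound_term.
  assert (0 <= INR (m (fst q) (snd q))) by apply pos_INR.
  pose proof (Cmod_ge_0 (fhat f (- snd q)%Z)).
  pose proof (Cmod_ge_0 (c_coef psi (fst q) eta)).
  destruct (Req_EM_T (fst q) 0).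
  - rewrite Rabs_R0. apply Rmult_le_pos; auto. apply Rmult_le_pos; auto.
  - rewrite Rabs_mult, Rabs_pos_eq by auto. rewrite Rmult_assoc.
    apply Rmult_le_compat_l; auto.
    eapply Rle_trans. apply re_le_Cmod. rewrite !Cmod_mult.
    assert (Cmod (cos (fst q * y), sin (fst q * y)) = 1).
    { unfold Cmod. rewrite <- sqrt_1. f_equal. simpl.
      pose proof (sin2_cos2 (fst q * y)). unfold Rsqr in *. simpl. nra. }
    rewrite H2. lra.
Qed.

Lemma lsum_abs {A} (F G : A -> R) L :
  (forall q, Rabs (F q) <= G q) -> Rabs (lsum F L) <= lsum G L.
Proof.
  intros H. induction L; simpl.
  - rewrite Rabs_R0; lra.
  - eapply Rle_trans. apply Rabs_triang. specialize (H a). lra.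
Qed.

Theorem corollary4p2
  (m : mult_data) (f psi : R -> R) (T eta eta0 : R) (L : list (R * Z))
  (* psi: smooth, even, nonnegative, supported in [-1,1], total integral 1 *)
  (Hpsi_smooth : smooth psi)
  (Hpsi_even : forall t, psi (- t) = psi t)
  (Hpsi_nonneg : forall t, 0 <= psi t)
  (Hpsi_supp : forall t, 1 < Rabs t -> psi t = 0)
  (Hpsi_int : RInt psi (-1) 1 = 1)
  (* f : R/2piZ -> R smooth with fhat(0) = 0 *)
  (Hf_per : periodic_2pi f) (Hf_smooth : smooth f)
  (Hf0 : fhat f 0 = RtoC 0)
  (HT : 0 < T) (Heta0 : 0 < eta0) (Heta : 0 < eta) (Hetale : eta <= eta0)
  (* L enumerates the distinct pairs (s,p) with |s|,|p| < T and m(s,p) <> 0 *)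
  (HLnd : NoDup L)
  (HL : forall q : R * Z, In q L <->
          (Rabs (fst q) < T /\ Rabs (IZR (snd q)) < T /\ m (fst q) (snd q) <> 0%nat)) :
  let b := b_coef m f psi eta in
  let BT := lsum (bound_term m f psi eta) L in
  let B := full_bound m f psi eta in
  (* (1) the mean of mu_{T,f,eta} is b_{f,eta} *)
  mu_integral_is m f psi eta eta0 L (fun x => x) b /\
  (* (2) mu_{T,f,eta} is supported in [b - 2 BT, b + 2 BT] *)
  (forall h : R -> R, (forall x, continuous h x) ->
     (forall x, b - 2 * BT <= x <= b + 2 * BT -> h x = 0) ->
     mu_integral_is m f psi eta eta0 L h 0) /\
  (* ... and this interval lies in [b - 2 B, b + 2 B] *)
  (forall x, b - 2 * BT <= x <= b + 2 * BT ->
     Rbar_le (Rbar_minus b (Rbar_mult 2 B)) x /\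
     Rbar_le x (Rbar_plus b (Rbar_mult 2 B))).
Proof.
  intros b BT B.
  set (Tm := fun q y => if Req_EM_T (fst q) 0 then 0 else
              INR (m (fst q) (snd q)) *
              Re (Cmult (Cmult (fhat f (- snd q)%Z) (cos (fst q * y), sin (fst q * y)))
                        (c_coef psi (fst q) eta))).
  assert (HE : forall y, E_T m f psi eta L y = 2 * lsum (fun q => Tm q y) L + b).
  { intros y. reflexivity. }
  assert (Hbd : forall y, b - 2 * BT <= E_T m f psi eta L y <= b + 2 * BT).
  { intros y. rewrite HE.
    pose proof (lsum_abs (fun q => Tm q y) (bound_term m f psi eta) L
                  (fun q => term_bound m f psi eta q y)).
    apply Rabs_le_between in H. fold BT in H. lra. }
  split; [|split].
  - unfold mu_integral_is.
    eapply is_lim_ext; [|apply (Good_mean (fun y => 2 * lsum (fun q => Tm q y) L) b eta0 Heta0)].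
    + intros Y. simpl. f_equal.
    + apply Good_scal. apply (Good_lsum Tm). intros q. apply term_good.
  - intros h Hc Hz. unfold mu_integral_is.
    eapply is_lim_ext; [|apply (is_lim_const 0)].
    intros Y. simpl. rewrite (RInt_ext _ (fun _ => 0)).
    + rewrite RInt_const. unfold scal; simpl. unfold mult; simpl. ring.
    + intros x _. apply Hz, Hbd.
  - intros x Hx.
    assert (HB : Rbar_le BT B).
    { destruct (Lub_Rbar_correct (fun x => exists L : list (R * Z), NoDup L /\
      (forall q, In q L -> m (fst q) (snd q) <> 0%nat) /\
      x = lsum (bound_term m f psi eta) L)) as [Hub _].
      apply Hub. exists L. split; auto. split; auto.
      intros q Hq. apply HL in Hq. tauto. }
    destruct B as [r| |]; simpl in HB |- *.
    + split; simpl; lra.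
    + destruct (Rle_dec 0 2) as [h|h]; [destruct (Rle_lt_or_eq_dec 0 2 h)|]; simpl; split; auto; lra.
    + destruct HB.
Qed.
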